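(* Let $G=(V,E)$ be a hypergraph, $k\ge 2$ an integer, and $\emptyset\neq R\subsetneq U\subsetneq V$. Let $S=\{u_1,\dots,u_p\}\subseteq U\setminus R$ with $p\ge 2k-2$. For each $i\in[p]$ let $(\overline{A_i},A_i)$ be a minimum $((S\cup R)\setminus\{u_i\},\overline{U})$-terminal cut. Suppose that $u_i\in A_i\setminus\bigl(\bigcup_{j\in[p]\setminus\{i\}}A_j\bigr)$ for every $i\in[p]$. Then there exists a $k$-partition $(P_1,\dots,P_k)$ of $V$ with $\overline{U}\subsetneq P_k$ such that \[\mathrm{cost}(P_1,\dots,P_k)\le \tfrac12\min\{d(A_i)+d(A_j): i,j\in[p],\ i\neq j\}.\]
   Context: A hypergraph $G=(V,E)$ has finite vertex set $V$ and finite multiset $E$ of hyperedges (subsets of $V$). For $X\subseteq V$, $\overline X=V\setminus X$ and $d(X)$ is the number of hyperedges meeting both $X$ and $\overline X$. For a partition of $V$ into non-empty parts, $\mathrm{cost}$ is the number of hyperedges meeting at least two parts. For disjoint $S',T'\subseteq V$, a 2-partition $(X,\overline X)$ is an $(S',T')$-terminal cut if $S'\subseteq X\subseteq V\setminus T'$ (so here $(S\cup R)\setminus\{u_i\}\subseteq\overline{A_i}$ and $\overline U\subseteq A_i$); it is minimum if $d(X)$ is minimum among all $(S',T')$-terminal cuts. *)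

(* Defs.v *)
From mathcomp Require Import all_boot.
Set Implicit Arguments. Unset Strict Implicit. Unset Printing Implicit Defensive.

Section Hypergraph.
Variable V : finType.
(* A hypergraph on vertex set V: the hyperedges form a finite multiset,
   represented as a list of subsets of V. *)
Variable E : seq {set V}.

Definition dcut (X : {set V}) : nat :=
  count (fun e : {set V} => (e :&: X != set0) && (e :&: ~: X != set0)) E.

Definition terminal_cut (S' T' X : {set V}) : bool :=
  (S' \subset X) && (X \subset ~: T').

Definition min_terminal_cut (S' T' X : {set V}) : Prop :=
  terminal_cut S' T' X /\
  forall Y : {set V}, terminal_cut S' T' Y -> dcut X <= dcut Y.

Definition kpartition (k : nat) (P : 'I_k -> {set V}) : Prop :=
  (forall i, P i != set0) /\
  (forall i j, i != j -> [disjoint P i & P j]) /\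
  (forall v : V, exists i, v \in P i).

Definition cost (k : nat) (P : 'I_k -> {set V}) : nat :=
  count (fun e : {set V} =>
    [exists i : 'I_k, exists j : 'I_k,
       [&& i != j, e :&: P i != set0 & e :&: P j != set0]]) E.

End Hypergraph.

(* Main.v *)
Require Import Defs.
From mathcomp Require Import all_boot zify.
Set Implicit Arguments. Unset Strict Implicit. Unset Printing Implicit Defensive.

Section Aux.
Variable V : finType.
Implicit Types (e X Y : {set V}).

Definition crs e X : bool := (e :&: X != set0) && (e :&: ~: X != set0).

Lemma meetE e X : (e :&: X != set0) = [exists x in e, x \in X].
Proof.
apply/set0Pn/existsP => [[x]|[x /andP[xe xX]]]; last by exists x; rewrite inE xe.
by rewrite inE => /andP[xe xX]; exists x; rewrite xe.
Qed.

Lemma crsE e X : crs e X = [exists x in e, x \in X] && [exists x in e, x \notin X].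
Proof.
rewrite /crs !meetE; congr (_ && _); apply: eq_existsb => x; by rewrite inE.
Qed.

Lemma crsC e X : crs e (~: X) = crs e X.
Proof. by rewrite /crs setCK andbC. Qed.

Lemma dcut_sum E X : dcut E X = \sum_(e <- E) crs e X.
Proof.
rewrite /dcut -sum1_count big_mkcond /=; apply: eq_bigr => e _.
by rewrite /crs; case: ifP.
Qed.

Lemma dcutC E X : dcut E (~: X) = dcut E X.
Proof. by rewrite !dcut_sum; apply: eq_bigr => e _; rewrite crsC. Qed.

Lemma exU e (P Q : pred V) :
  [exists x in e, P x || Q x] = [exists x in e, P x] || [exists x in e, Q x].
Proof.
apply/existsP/orP => [[x /andP[xe /orP[]]]|[]/existsP[x /andP[xe]]] H.
- by left; apply/existsP; exists x; rewrite xe.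
- by right; apply/existsP; exists x; rewrite xe.
- by exists x; rewrite xe H.
- by exists x; rewrite xe H orbT.
Qed.

Lemma exImp e (P Q : pred V) : (forall x, x \in e -> P x -> Q x) ->
  [exists x in e, P x] -> [exists x in e, Q x].
Proof.
move=> H /existsP[x /andP[xe Px]]; apply/existsP; exists x; rewrite xe.
exact: H.
Qed.

Lemma exEq e (P Q : pred V) : (forall x, x \in e -> P x = Q x) ->
  [exists x in e, P x] = [exists x in e, Q x].
Proof.
move=> H; apply: eq_existsb => x; case xe: (x \in e) => //=; exact: H.
Qed.
End Aux.

Lemma tri (n : nat) : [|| n == 0, n == 1 | 1 < n].
Proof. by case: n => [|[|]]. Qed.

Section Chain.
Variables (V : finType) (p : nat) (A : 'I_p -> {set V}).
Implicit Types (e X : {set V}) (J : {set 'I_p}).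

Definition cnt J (x : V) := #|[set l in J | x \in A l]|.
Definition common J x y := [exists l in J, (x \in A l) && (y \in A l)].
Definition bigb J e := [exists x in e, exists y in e,
   [&& cnt J x == 1, cnt J y == 1 & ~~ common J x y]].
Definition nb J e := [exists x in e, cnt J x == 0].
Definition ob J e := [exists x in e, 1 < cnt J x].
Definition zb J e := [exists x in e, cnt J x == 1].
Definition Iv (bg n o z : bool) : nat :=
  if bg || (n && o) then 2 else (1 < z + n + o).
Definition IJ J e := Iv (bigb J e) (nb J e) (ob J e) (zb J e).
Definition L2 J := [set x | 1 < cnt J x].

Lemma cntU1 J l0 x : l0 \notin J -> cnt (l0 |: J) x = cnt J x + (x \in A l0).
Proof.
move=> l0J; rewrite /cnt; case: (boolP (x \in A l0)) => h.
  have -> : [set l in l0 |: J | x \in A l] = l0 |: [set l in J | x \in A l].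
    by apply/setP=> l; rewrite !inE; case: eqP => // ->; rewrite h.
  by rewrite cardsU1 inE (negbTE l0J) addnC.
have -> : [set l in l0 |: J | x \in A l] = [set l in J | x \in A l].
  apply/setP=> l; rewrite !inE; case: eqP => //= ->.
  by rewrite (negbTE h) !andbF.
by rewrite addn0.
Qed.

Lemma Iv_mono bg n o z bg' n' o' z' : bg ==> bg' -> n ==> n' -> o ==> o' ->
  z ==> z' -> Iv bg n o z <= Iv bg' n' o' z'.
Proof.
by case: bg bg' n n' o o' z z' => [] [] [] [] [] [] [] [].
Qed.


Lemma key (a b c d f g h : bool) : h ==> g ->
  Iv (h || a && g) b [|| c, d | f] (g || a) + (c && [|| a, b, d, f | g])
  <= Iv h (a || b) (c || d) (f || g) + ((a || f || c) && (b || g || d)).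
Proof. by case: a b c d f g h => [] [] [] [] [] [] []. Qed.

Lemma step J l0 e : l0 \notin J ->
  IJ (l0 |: J) e + crs e (A l0 :&: L2 J) <= IJ J e + crs e (A l0).
Proof.
move=> l0J.
have cE x : cnt (l0 |: J) x = cnt J x + (x \in A l0) by apply: cntU1.
set a := A l0.
pose n0A := [exists x in e, (cnt J x == 0) && (x \in a)].
pose n0N := [exists x in e, (cnt J x == 0) && (x \notin a)].
pose oA := [exists x in e, (1 < cnt J x) && (x \in a)].
pose oN := [exists x in e, (1 < cnt J x) && (x \notin a)].
pose z1A := [exists x in e, (cnt J x == 1) && (x \in a)].
pose bN1 := [exists x in e, (cnt J x == 1) && (x \notin a)].
pose bN2 := [exists x in e, exists y in e,
   [&& cnt J x == 1, cnt J y == 1, x \notin a, y \notin a & ~~ common J x y]].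
have hn : nb J e = n0A || n0N.
  by rewrite /nb -exU; apply: exEq => x _; rewrite -andb_orr orbN andbT.
have ho : ob J e = oA || oN.
  by rewrite /ob -exU; apply: exEq => x _; rewrite -andb_orr orbN andbT.
have hz : zb J e = z1A || bN1.
  by rewrite /zb -exU; apply: exEq => x _; rewrite -andb_orr orbN andbT.
have hbig : bN2 ==> bigb J e.
  apply/implyP => /existsP[x /andP[xe /existsP[y /andP[ye /and5P[c1 c2 _ _ nc]]]]].
  apply/existsP; exists x; rewrite xe; apply/existsP; exists y.
  by rewrite ye c1 c2 nc.
have h21 : bN2 ==> bN1.
  apply/implyP => /existsP[x /andP[xe /existsP[y /andP[ye /and5P[c1 c2 xa _ _]]]]].
  by apply/existsP; exists x; rewrite xe c1 xa.
have hn' : nb (l0 |: J) e ==> n0N.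
  apply/implyP; apply: exImp => w _; rewrite cE; case: (w \in a); rewrite /= ?addn1 ?addn0 ?andbT //.
have ho' : ob (l0 |: J) e ==> [|| oA, oN | z1A].
  apply/implyP => /existsP[x /andP[xe]]; rewrite cE => h.
  case xa: (x \in a) h => /= h.
    case/or3P: (tri (cnt J x)) => [/eqP c0|/eqP c1|c2].
    - by rewrite c0 in h.
    - by apply/or3P; constructor 3; apply/existsP; exists x; rewrite xe c1 xa.
    - by apply/or3P; constructor 1; apply/existsP; exists x; rewrite xe c2 xa.
  rewrite addn0 in h.
  by apply/or3P; constructor 2; apply/existsP; exists x; rewrite xe h xa.
have hz' : zb (l0 |: J) e ==> bN1 || n0A.
  apply/implyP => /existsP[x /andP[xe]]; rewrite cE => h.
  case xa: (x \in a) h => /= h.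
    rewrite addn1 eqSS in h.
    by apply/orP; right; apply/existsP; exists x; rewrite xe h xa.
  rewrite addn0 in h.
  by apply/orP; left; apply/existsP; exists x; rewrite xe h xa.
have hbig' : bigb (l0 |: J) e ==> bN2 || (n0A && bN1).
  apply/implyP => /existsP[x /andP[xe /existsP[y /andP[ye /and3P[cx cy nc]]]]].
  rewrite !cE in cx cy.
  case xa: (x \in a) cx => /= cx; case ya: (y \in a) cy => /= cy.
  - case/negP: nc; apply/existsP; exists l0; by rewrite !inE eqxx xa ya.
  - rewrite addn1 eqSS in cx; rewrite addn0 in cy.
    have H1 : n0A by apply/existsP; exists x; rewrite xe cx xa.
    have H2 : bN1 by apply/existsP; exists y; rewrite ye cy ya.
    by rewrite H1 H2 orbT.
  - rewrite addn1 eqSS in cy; rewrite addn0 in cx.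
    have H1 : n0A by apply/existsP; exists y; rewrite ye cy ya.
    have H2 : bN1 by apply/existsP; exists x; rewrite xe cx xa.
    by rewrite H1 H2 orbT.
  - rewrite addn0 in cx; rewrite addn0 in cy.
    have H : bN2.
      apply/existsP; exists x; rewrite xe; apply/existsP; exists y.
      rewrite ye cx cy xa ya /=; apply: contra nc => /existsP[l /andP[lJ /andP[xl yl]]].
      by apply/existsP; exists l; rewrite !inE lJ orbT xl yl.
    by rewrite H.
have hcA : crs e a = (n0A || z1A || oA) && (n0N || bN1 || oN).
  rewrite crsE /n0A /z1A /oA /n0N /bN1 /oN -!exU; congr (_ && _);
  apply: exEq => w _; case: (cnt J w) => [|[|n]] /=; by rewrite ?orbF.
have hcL : crs e (a :&: L2 J) ==> oA && [|| n0A, n0N, oN, z1A | bN1].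
  rewrite crsE; apply/implyP => /andP[h1 h2]; apply/andP; split.
    move: h1; apply: exImp => w _; rewrite !inE => /andP[wa wl]; by rewrite wl wa.
  move: h2 => /existsP[w /andP[we]]; rewrite !inE negb_and => h.
  case/or3P: (tri (cnt J w)) => [/eqP c0|/eqP c1|c2]; case wa: (w \in a).
  - have H : n0A by apply/existsP; exists w; rewrite we c0 wa.
    by rewrite H.
  - have H : n0N by apply/existsP; exists w; rewrite we c0 wa.
    by rewrite H orbT.
  - have H : z1A by apply/existsP; exists w; rewrite we c1 wa.
    by rewrite H !orbT.
  - have H : bN1 by apply/existsP; exists w; rewrite we c1 wa.
    by rewrite H !orbT.
  - by rewrite wa c2 in h.
  - have H : oN by apply/existsP; exists w; rewrite we c2 wa.
    by rewrite H !orbT.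
apply: (@leq_trans (Iv (bN2 || n0A && bN1) n0N [|| oA, oN | z1A] (bN1 || n0A)
   + (oA && [|| n0A, n0N, oN, z1A | bN1]))).
  apply: leq_add; first by apply: Iv_mono.
  by move: hcL; case: (crs _ _); case: (_ && _).
apply: (@leq_trans (Iv bN2 (n0A || n0N) (oA || oN) (z1A || bN1) + crs e a)).
  by rewrite hcA; apply: key.
apply: leq_add => //.
by rewrite /IJ hn ho hz; apply: Iv_mono; rewrite ?implybb.
Qed.

Lemma cnt_uniq J x l m : cnt J x = 1 -> l \in J -> m \in J -> x \in A l -> x \in A m -> l = m.
Proof.
rewrite /cnt => /eqP/cards1P[z Hz] lJ mJ xl xm.
have : l \in [set l in J | x \in A l] by rewrite inE lJ xl.
have : m \in [set l in J | x \in A l] by rewrite inE mJ xm.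
by rewrite Hz !inE => /eqP-> /eqP->.
Qed.

Lemma Iv_two (bg n o z : bool) : bg -> Iv bg n o z = 2.
Proof. by move=> ->. Qed.

Lemma Iv_pos bg n o z : bg || (z && (n || o)) -> 0 < Iv bg n o z.
Proof. by case: bg n o z => [] [] [] []. Qed.

Lemma cnt2 i j x : i != j -> cnt [set i; j] x = (x \in A i) + (x \in A j).
Proof.
move=> ij; have ij' : i \notin [set j] by rewrite inE.
rewrite cntU1 // addnC; congr (_ + _).
rewrite /cnt; case: (boolP (x \in A j)) => h.
  have -> : [set l in [set j] | x \in A l] = [set j].
    by apply/setP => l; rewrite !inE; case: eqP => // ->.
  by rewrite cards1.
have -> : [set l in [set j] | x \in A l] = set0.
  by apply/setP => l; rewrite !inE; case: eqP => // ->; rewrite (negbTE h).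
by rewrite cards0.
Qed.

Lemma base i j e : i != j -> IJ [set i; j] e <= crs e (A i) + crs e (A j).
Proof.
move=> ij; have cE := cnt2 _ ij.
pose a := [exists x in e, (x \in A i) && (x \notin A j)].
pose b := [exists x in e, (x \notin A i) && (x \in A j)].
pose c := [exists x in e, (x \in A i) && (x \in A j)].
pose nn := [exists x in e, (x \notin A i) && (x \notin A j)].
have hn : nb [set i; j] e = nn.
  by apply: exEq => w _; rewrite cE; case: (w \in A i); case: (w \in A j).
have ho : ob [set i; j] e = c.
  by apply: exEq => w _; rewrite cE; case: (w \in A i); case: (w \in A j).
have hz : zb [set i; j] e = a || b.
  by rewrite /a /b -exU; apply: exEq => w _; rewrite cE; case: (w \in A i); case: (w \in A j).
have hbig : bigb [set i; j] e ==> a && b.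
  apply/implyP => /existsP[x /andP[xe /existsP[y /andP[ye /and3P[cx cy nc]]]]].
  rewrite !cE in cx cy.
  have cm : forall l, l \in [set i; j] -> x \in A l -> y \in A l -> False.
    move=> l lJ xl yl; case/negP: nc; apply/existsP; exists l; by rewrite lJ xl yl.
  have iJ : i \in [set i; j] by rewrite !inE eqxx.
  have jJ : j \in [set i; j] by rewrite !inE eqxx orbT.
  case xi: (x \in A i) cx; case xj: (x \in A j) => //= _;
  case yi: (y \in A i) cy; case yj: (y \in A j) => //= _.
  - by case: (cm i iJ xi yi).
  - have H1 : a by apply/existsP; exists x; rewrite xe xi xj.
    have H2 : b by apply/existsP; exists y; rewrite ye yi yj.
    by rewrite H1 H2.
  - have H1 : a by apply/existsP; exists y; rewrite ye yi yj.
    have H2 : b by apply/existsP; exists x; rewrite xe xi xj.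
    by rewrite H1 H2.
  - by case: (cm j jJ xj yj).
have hi : crs e (A i) = (a || c) && (b || nn).
  rewrite crsE /a /b /c /nn -!exU; congr (_ && _); apply: exEq => w _;
  by case: (w \in A i); case: (w \in A j).
have hj : crs e (A j) = (b || c) && (a || nn).
  rewrite crsE /a /b /c /nn -!exU; congr (_ && _); apply: exEq => w _;
  by case: (w \in A i); case: (w \in A j).
rewrite /IJ hn ho hz hi hj.
clear hn ho hz hi hj; move: hbig; clearbody a b c nn.
by case: (bigb _ _); case: a; case: b; case: c; case: nn.
Qed.

Definition Zs c := [set x | (x \in A c) && (cnt setT x == 1)].

Lemma fin1 e c : crs e (Zs c) -> 0 < IJ setT e.
Proof.
rewrite crsE => /andP[/existsP[x /andP[xe xZ]] /existsP[y /andP[ye hy]]].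
move: xZ; rewrite !inE => /andP[xc /eqP cx]; rewrite inE in hy.
apply: Iv_pos.
have zx : zb setT e by apply/existsP; exists x; rewrite xe cx.
case/or3P: (tri (cnt setT y)) => [/eqP c0|/eqP c1|c2].
- have : nb setT e by apply/existsP; exists y; rewrite ye c0.
  by move=> ->; rewrite zx orbT.
- have yc : y \notin A c by move: hy; rewrite c1 eqxx andbT.
  have : bigb setT e.
    apply/existsP; exists x; rewrite xe; apply/existsP; exists y.
    rewrite ye cx c1 !eqxx /=; apply/negP => /existsP[l /andP[_ /andP[xl yl]]].
    have := cnt_uniq cx (in_setT l) (in_setT c) xl xc.
    by move=> lc; rewrite -lc yl in yc.
  by move=> ->.
- have : ob setT e by apply/existsP; exists y; rewrite ye c2.
  by move=> ->; rewrite zx !orbT.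
Qed.

Lemma fin2 e c1 c2 : c1 != c2 -> crs e (Zs c1) -> crs e (Zs c2) -> IJ setT e = 2.
Proof.
move=> c12; rewrite !crsE => /andP[/existsP[x /andP[xe xZ]] _] /andP[/existsP[y /andP[ye yZ]] _].
move: xZ yZ; rewrite !inE => /andP[xc /eqP cx] /andP[yc /eqP cy].
apply: Iv_two; apply/existsP; exists x; rewrite xe; apply/existsP; exists y.
rewrite ye cx cy !eqxx /=; apply/negP => /existsP[l /andP[_ /andP[xl yl]]].
have := cnt_uniq cx (in_setT l) (in_setT c1) xl xc.
have := cnt_uniq cy (in_setT l) (in_setT c2) yl yc.
by move=> h2 h1; rewrite -h1 -h2 eqxx in c12.
Qed.

End Chain.
Section Main.
Variables (V : finType) (E : seq {set V}) (p : nat) (A : 'I_p -> {set V}) (U : {set V}).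
Hypothesis HT : forall l, ~: U \subset A l.
Hypothesis Hcut : forall l (Y : {set V}), Y \subset A l -> ~: U \subset Y ->
  dcut E (A l) <= dcut E Y.

Lemma sumI (i j : 'I_p) (J : {set 'I_p}) : i != j -> i \in J -> j \in J ->
  \sum_(e <- E) IJ A J e <= dcut E (A i) + dcut E (A j).
Proof.
move=> ij; move: {2}#|J| (leqnn #|J|) => n; elim: n J => [|n IH] J.
  by rewrite leqn0 => /eqP/cards0_eq ->; rewrite inE.
move=> Jn iJ jJ.
case: (boolP (J \subset [set i; j])) => sJ.
  have -> : J = [set i; j].
    apply/eqP; rewrite eqEsubset sJ; apply/subsetP => x.
    by rewrite !inE => /orP[]/eqP->.
  rewrite !dcut_sum -big_split /=; apply: leq_sum => e _; exact: base.
case/subsetPn: sJ => l0 l0J l0n.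
have eJ : J = l0 |: (J :\ l0) by rewrite setD1K.
have l0J0 : l0 \notin J :\ l0 by rewrite !inE eqxx.
have iJ0 : i \in J :\ l0.
  rewrite !inE iJ andbT; apply: contra l0n => /eqP->; by rewrite !inE eqxx.
have jJ0 : j \in J :\ l0.
  rewrite !inE jJ andbT; apply: contra l0n => /eqP->; by rewrite !inE eqxx orbT.
have cJ0 : #|J :\ l0| <= n by move: Jn; rewrite (cardsD1 l0 J) l0J add1n.
have H := IH _ cJ0 iJ0 jJ0.
have S : \sum_(e <- E) IJ A J e + dcut E (A l0 :&: L2 A (J :\ l0))
    <= \sum_(e <- E) IJ A (J :\ l0) e + dcut E (A l0).
  rewrite !dcut_sum -!big_split /=; apply: leq_sum => e _; rewrite {1}eJ.
  exact: step.
have M : dcut E (A l0) <= dcut E (A l0 :&: L2 A (J :\ l0)).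
  apply: Hcut; first exact: subsetIl.
  apply/subsetP => x xU; rewrite !inE (subsetP (HT l0)) //=.
  rewrite /cnt; apply: (@leq_trans #|[set i; j]|); first by rewrite cards2 ij.
  apply: subset_leq_card; apply/subsetP => l; rewrite !inE => /orP[]/eqP->.
  - by move: iJ0; rewrite !inE => ->; rewrite (subsetP (HT i)).
  - by move: jJ0; rewrite !inE => ->; rewrite (subsetP (HT j)).
lia.
Qed.

End Main.
Section Part.
Variables (V : finType) (p k : nat) (A : 'I_p -> {set V}) (U R : {set V}) (u : 'I_p -> V).
Variable i0 : 'I_p.
Hypothesis Hk : 1 <= k.
Hypothesis Hp2 : 2 <= p.
Hypothesis HT : forall l, ~: U \subset A l.
Hypothesis HR0 : R != set0.
Hypothesis HRU : R \subset U.
Hypothesis HRA : forall l x, x \in R -> x \notin A l.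
Hypothesis Hu : forall c, u c \in A c :\: \bigcup_(j in 'I_p | j != c) A j.

Definition g (o : nat) (s : 'I_k) : 'I_p := insubd i0 (s + o).
Definition Rest o := ~: \bigcup_(t : 'I_k | val t < k.-1) Zs A (g o t).
Definition Pt o (s : 'I_k) : {set V} :=
  if val s < k.-1 then Zs A (g o s) else Rest o.

Lemma gval o (s : 'I_k) : k.-1 + o <= p -> val s < k.-1 -> val (g o s) = s + o.
Proof.
move=> h1 h2; rewrite /g val_insubd.
have -> : s + o < p by move: h1 h2 => /=; lia.
by [].
Qed.

Lemma cnt_u c : cnt A setT (u c) = 1.
Proof.
rewrite /cnt; have -> : [set l in setT | u c \in A l] = [set c]; last by rewrite cards1.
move: (Hu c); rewrite inE => /andP[nb ua].
apply/setP => l; rewrite !inE; case: eqP => [->|/eqP lc]; first by rewrite ua.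
apply/negP => ul; case/negP: nb; apply/bigcupP; exists l => //.
Qed.

Lemma Zs_u c : u c \in Zs A c.
Proof.
rewrite inE cnt_u eqxx andbT; move: (Hu c); rewrite inE => /andP[_ ->] //.
Qed.

Lemma R_notZ x c : x \in R -> x \notin Zs A c.
Proof. by move=> xR; rewrite inE (negbTE (HRA c xR)). Qed.

Lemma T_notZ x c : x \notin U -> x \notin Zs A c.
Proof.
move=> xU; rewrite inE negb_and orbC; apply/orP; left.
have -> : cnt A setT x = p.
  rewrite /cnt; have -> : [set l in setT | x \in A l] = setT.
    apply/setP => l; rewrite !inE; apply: (subsetP (HT l)); by rewrite inE.
  by rewrite cardsT card_ord.
by case: p Hp2 => [|[|]].
Qed.

Lemma Z_disj c1 c2 x : c1 != c2 -> x \in Zs A c1 -> x \notin Zs A c2.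
Proof.
move=> c12; rewrite !inE => /andP[x1 /eqP cx]; apply/negP => /andP[x2 _].
have := cnt_uniq cx (in_setT c1) (in_setT c2) x1 x2.
by move=> e; rewrite e eqxx in c12.
Qed.

Lemma rest_R o r : r \in R -> r \in Rest o.
Proof.
move=> rR; rewrite inE; apply/negP => /bigcupP[t _ rZ].
by rewrite (negbTE (R_notZ _ rR)) in rZ.
Qed.

Lemma Pt_disj o (s t : 'I_k) x : k.-1 + o <= p -> s != t -> x \in Pt o s -> x \notin Pt o t.
Proof.
move=> ho st; rewrite /Pt; case: ifP => hs xs; case: ifP => ht //.
- apply: (Z_disj _ xs); apply: contra st => /eqP /(congr1 val).
  rewrite !gval // => /eqP; rewrite eqn_add2r => /eqP h; apply/eqP; exact: val_inj.
- apply/negP; rewrite inE => /negP; apply; apply/bigcupP; exists s => //.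
- apply/negP => xZ; move: xs; rewrite inE => /negP; apply; apply/bigcupP.
  by exists t.
- case/negP: st; apply/eqP; apply: val_inj; move: hs ht (ltn_ord s) (ltn_ord t).
  rewrite /=; lia.
Qed.


Lemma Pt_kpart o : k.-1 + o <= p -> kpartition (Pt o).
Proof.
move=> ho; split; [|split].
- move=> s; rewrite /Pt; case: ifP => hs.
    by apply/set0Pn; exists (u (g o s)); exact: Zs_u.
  case/set0Pn: HR0 => r rR; apply/set0Pn; exists r; exact: rest_R.
- move=> s t st; rewrite -setI_eq0; apply/eqP/setP => x; rewrite !inE.
  apply/negP => /andP[xs xt]; by rewrite (negbTE (Pt_disj ho st xs)) in xt.
- move=> x.
  case: (boolP (x \in \bigcup_(t : 'I_k | val t < k.-1) Zs A (g o t))).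
    by case/bigcupP => t ht xt; exists t; rewrite /Pt ht.
  move=> h; have hk : k.-1 < k by case: k Hk.
  by exists (Ordinal hk); rewrite /Pt /= ltnn inE h.
Qed.

Lemma Pt_last o (l : 'I_k) : val l = k.-1 -> ~: U \proper Pt o l.
Proof.
move=> hl; rewrite /Pt hl ltnn; apply/properP; split.
  apply/subsetP => x xU; rewrite inE; apply/negP => /bigcupP[t _ xZ].
  by rewrite inE in xU; rewrite (negbTE (T_notZ _ xU)) in xZ.
case/set0Pn: HR0 => r rR; exists r; first exact: rest_R.
by rewrite inE negbK (subsetP HRU).
Qed.

Definition cC o (e : {set V}) := [exists t : 'I_k, (val t < k.-1) && crs e (Zs A (g o t))].

Lemma Pt_cost (E : seq {set V}) o : k.-1 + o <= p ->
  cost E (Pt o) <= \sum_(e <- E) cC o e.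
Proof.
move=> ho; rewrite /cost -sum1_count big_mkcond /=; apply: leq_sum => e _.
case: ifP => // /existsP[s /existsP[t /and3P[st es et]]].
have gen : forall s t : 'I_k, s != t -> val s < k.-1 -> e :&: Pt o s != set0 ->
    e :&: Pt o t != set0 -> cC o e.
  move=> s1 t1 st1 hs1; rewrite !meetE => es1 et1.
  have PZ : Pt o s1 = Zs A (g o s1) by rewrite /Pt hs1.
  have D := Pt_disj ho st1.
  apply/existsP; exists s1; rewrite hs1 /= crsE -PZ es1 andTb.
  move: et1; apply: exImp => y _ yt.
  by apply/negP => yZ; move: (D y yZ); rewrite yt.
rewrite lt0b; case: (ltnP (val s) k.-1) => hs; first exact: gen st hs es et.
apply: (gen t s) => //; first by rewrite eq_sym.
move: hs (ltn_ord s) (ltn_ord t) st => /= hs hs' ht' st.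
rewrite ltnNge; apply/negP => /= ht.
case/negP: st; apply/eqP; apply: val_inj => /=; lia.
Qed.

Lemma comb e : k.-1 + k.-1 <= p -> cC 0 e + cC k.-1 e <= IJ A setT e.
Proof.
move=> ho; have ho0 : k.-1 + 0 <= p by lia.
case E1: (cC 0 e); case E2: (cC k.-1 e) => //=.
- move: E1 E2 => /existsP[t1 /andP[h1 c1]] /existsP[t2 /andP[h2 c2]].
  rewrite (fin2 _ c1 c2) //; apply/negP => /eqP /(congr1 val).
  rewrite !gval //; move: h1 h2 => /= h1 h2; lia.
- move: E1 => /existsP[t1 /andP[h1 c1]]; exact: fin1 c1.
- move: E2 => /existsP[t1 /andP[h1 c1]]; exact: fin1 c1.
Qed.

End Part.

Unset Implicit Arguments.

Theorem theorem3p1 (V : finType) (E : seq {set V}) (k p : nat)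
  (R U : {set V}) (u : 'I_p -> V) (A : 'I_p -> {set V}) :
  2 <= k ->
  R != set0 -> R \proper U -> U \proper [set: V] ->
  injective u ->
  [set u i | i in 'I_p] \subset U :\: R ->
  2 * k - 2 <= p ->
  (forall i : 'I_p,
     min_terminal_cut E (([set u j | j in 'I_p] :|: R) :\ u i) (~: U) (~: A i)) ->
  (forall i : 'I_p,
     u i \in A i :\: \bigcup_(j in 'I_p | j != i) A j) ->
  exists P : 'I_k -> {set V},
    kpartition P /\
    (forall l : 'I_k, val l = k.-1 -> ~: U \proper P l) /\
    (forall i j : 'I_p, i != j -> 2 * cost E P <= dcut E (A i) + dcut E (A j)).
Proof.
move=> Hk HR0 HRU HUV uinj Hsub Hp Hmin Hu.
have Hp2 : 2 <= p by lia.
have p0 : 0 < p by lia.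
pose i0 := Ordinal p0.
have Hk1 : 1 <= k by lia.
have HRU' : R \subset U by case/andP: HRU.
have HT : forall l, ~: U \subset A l.
  by move=> l; case: (Hmin l) => /andP[_ h] _; move: h; rewrite setCS.
have Hcut : forall l (Y : {set V}), Y \subset A l -> ~: U \subset Y ->
    dcut E (A l) <= dcut E Y.
  move=> l Y YA UY; case: (Hmin l) => /andP[h1 _] h.
  rewrite -dcutC -(dcutC E Y); apply: h; apply/andP; split.
    by apply: (subset_trans h1); rewrite setCS.
  by rewrite setCS.
have HRA : forall l x, x \in R -> x \notin A l.
  move=> l x xR; case: (Hmin l) => /andP[h1 _] _.
  have ul : u l \in U :\: R by apply: (subsetP Hsub); apply: imset_f.
  have : x \in ([set u j | j in 'I_p] :|: R) :\ u l.
    rewrite !inE xR orbT andbT; apply/eqP => xu; move: ul.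
    by rewrite -xu !inE xR.
  by move/(subsetP h1); rewrite inE.
have Htot : forall i j : 'I_p, i != j ->
    \sum_(e <- E) IJ A setT e <= dcut E (A i) + dcut E (A j).
  move=> i j ij; exact: (sumI HT Hcut ij (in_setT i) (in_setT j)).
have ho0 : k.-1 + 0 <= p by lia.
have ho1 : k.-1 + k.-1 <= p by lia.
pose P0 := @Pt V p k A i0 0.
pose P1 := @Pt V p k A i0 k.-1.
have Hc : cost E P0 + cost E P1 <= \sum_(e <- E) IJ A setT e.
  apply: (@leq_trans (\sum_(e <- E) cC k A i0 0 e + \sum_(e <- E) cC k A i0 k.-1 e)).
    apply: leq_add.
      exact: (@Pt_cost V p k A U R i0 Hk1 Hp2 HR0 HRU' E 0 ho0).
    exact: (@Pt_cost V p k A U R i0 Hk1 Hp2 HR0 HRU' E k.-1 ho1).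
  rewrite -big_split /=; apply: leq_sum => e _.
  exact: (@comb V p k A U R i0 Hk1 Hp2 HR0 HRU' e ho1).
exists (if cost E P0 <= cost E P1 then P0 else P1).
split; [|split].
- case: ifP => _.
    exact: (@Pt_kpart V p k A U R u i0 Hk1 Hp2 HR0 HRU' HRA Hu 0 ho0).
  exact: (@Pt_kpart V p k A U R u i0 Hk1 Hp2 HR0 HRU' HRA Hu k.-1 ho1).
- move=> l hl; case: ifP => _.
    exact: (@Pt_last V p k A U R i0 Hp2 HT HR0 HRU' HRA 0 l hl).
  exact: (@Pt_last V p k A U R i0 Hp2 HT HR0 HRU' HRA k.-1 l hl).
- move=> i j ij; have := Htot i j ij; case: ifP => h; lia.
Qed.
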